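(* Let $N\ge 4$ be even and let $P_1,\dots,P_N$ be an $N$-periodic billiard trajectory in $E$, with outer polygon $P_1',\dots,P_N'$. For $j=1,2$ let $\bar Q'_{j,i}$ be the foot of the perpendicular from $f_j$ to the line $P_i'P_{i+1}'$, and let $\bar A_j'$ be the signed area of the polygon $\bar Q'_{j,1},\dots,\bar Q'_{j,N}$. Then $\bar A_1'=\bar A_2'$, i.e. $\bar A_1'/\bar A_2'=1$.
   Context: Let $E$ be the ellipse $x^2/a^2+y^2/b^2=1$ with $a>b>0$, center $O=(0,0)$ and foci $f_1=(-\sqrt{a^2-b^2},0)$, $f_2=(\sqrt{a^2-b^2},0)$. An $N$-periodic billiard trajectory is a convex polygon with vertices $P_1,\dots,P_N\in E$ (indices mod $N$), listed counterclockwise and winding once around $O$, with $P_i\neq P_{i+1}$, such that at every vertex $P_i$ the normal line to $E$ at $P_i$ bisects the angle $\angle P_{i-1}P_iP_{i+1}$, and all of whose sides are tangent to a common ellipse confocal with $E$. Its outer polygon has vertices $P_i'$ = intersection of the tangent lines to $E$ at $P_i$ and at $P_{i+1}$. The signed area of a polygon with vertices $W_i=(x_i,y_i)$, $i=1,\dots,N$ (indices mod $N$), is $S=\tfrac12\sum_{i=1}^N (x_iy_{i+1}-x_{i+1}y_i)$. *)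

(* Defs.v *)
From Stdlib Require Import Reals Lra List.
Open Scope R_scope.

Definition pt := (R * R)%type.

Definition cross (u v : pt) : R := fst u * snd v - snd u * fst v.
Definition dot (u v : pt) : R := fst u * fst v + snd u * snd v.
Definition vsub (u v : pt) : pt := (fst u - fst v, snd u - snd v).
Definition vadd (u v : pt) : pt := (fst u + fst v, snd u + snd v).
Definition vscale (k : R) (u : pt) : pt := (k * fst u, k * snd u).
Definition vnorm (u : pt) : R := sqrt (dot u u).

Definition on_line (p q X : pt) : Prop :=
  exists t : R, X = vadd p (vscale t (vsub q p)).

Definition on_ellipse (A B : R) (X : pt) : Prop :=
  (fst X)^2 / A^2 + (snd X)^2 / B^2 = 1.

Definition ell_normal (a b : R) (P : pt) : pt := (fst P / a^2, snd P / b^2).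

Definition on_tangent (a b : R) (P X : pt) : Prop :=
  fst X * fst P / a^2 + snd X * snd P / b^2 = 1.

Definition line_tangent_to_ellipse (A B : R) (p q : pt) : Prop :=
  p <> q /\ exists! X : pt, on_line p q X /\ on_ellipse A B X.

Definition confocal (a b A B : R) : Prop :=
  A > B /\ B > 0 /\ A^2 - B^2 = a^2 - b^2.

Definition focus1 (a b : R) : pt := (- sqrt (a^2 - b^2), 0).
Definition focus2 (a b : R) : pt := (sqrt (a^2 - b^2), 0).

(* N-periodic billiard trajectory, indices 0..N-1 taken mod N
   (encoded as an N-periodic sequence P : nat -> pt). *)
Definition billiard_trajectory (a b : R) (N : nat) (P : nat -> pt) : Prop :=
  (forall i, P (i + N)%nat = P i) /\
  (forall i, on_ellipse a b (P i)) /\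
  (forall i, P i <> P (S i)) /\
  (* counterclockwise, winding once around O: polar angles strictly increase
     and increase by exactly 2*PI over one period *)
  (exists (r phi : nat -> R),
      (forall i, r i > 0) /\
      (forall i, P i = (r i * cos (phi i), r i * sin (phi i))) /\
      (forall i, phi i < phi (S i)) /\
      (forall i, phi (i + N)%nat = phi i + 2 * PI)) /\
  (* convex (counterclockwise turns) *)
  (forall i, cross (vsub (P (S i)) (P i)) (vsub (P (S (S i))) (P (S i))) >= 0) /\
  (* reflection law: the normal at P_{i+1} bisects angle P_i P_{i+1} P_{i+2} *)
  (forall i,
      let u := vsub (P i) (P (S i)) in
      let v := vsub (P (S (S i))) (P (S i)) in
      cross (vadd (vscale (/ vnorm u) u) (vscale (/ vnorm v) v))
            (ell_normal a b (P (S i))) = 0) /\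
  (exists A B : R, confocal a b A B /\
      forall i, line_tangent_to_ellipse A B (P i) (P (S i))).

Definition outer_polygon (a b : R) (P P' : nat -> pt) : Prop :=
  forall i, on_tangent a b (P i) (P' i) /\ on_tangent a b (P (S i)) (P' i).

Definition pedal_feet (f : pt) (P' Q : nat -> pt) : Prop :=
  forall i, on_line (P' i) (P' (S i)) (Q i) /\
            dot (vsub f (Q i)) (vsub (P' (S i)) (P' i)) = 0.

Definition signed_area (N : nat) (W : nat -> pt) : R :=
  / 2 * fold_right Rplus 0
    (map (fun i => cross (W i) (W ((S i) mod N)%nat)) (seq 0 N)).

(* Main.v *)
Require Import Defs.
From Stdlib Require Import Reals Lra List Arith Lia Psatz.
Open Scope R_scope.
Ltac nz := repeat split; try lra; try (apply Rgt_not_eq; lra); try (apply Rlt_not_eq; lra).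


Lemma sq_pos (x : R) : x <> 0 -> x^2 > 0.
Proof. intros H. destruct (Rlt_or_le x 0); [nra|]. assert (x > 0) by lra. nra. Qed.

Lemma pt_neq (p q : pt) : p <> q -> (fst q - fst p)^2 + (snd q - snd p)^2 > 0.
Proof.
  destruct p as [px py], q as [qx qy]; simpl; intros H.
  destruct (Req_dec qx px) as [E1|E1]; destruct (Req_dec qy py) as [E2|E2].
  - subst; exfalso; apply H; reflexivity.
  - assert ((qy - py)^2 > 0) by (apply sq_pos ; lra). nra.
  - assert ((qx - px)^2 > 0) by (apply sq_pos ; lra). nra.
  - assert ((qy - py)^2 > 0) by (apply sq_pos ; lra). nra.
Qed.

Lemma collinear_on_line (p q Z : pt) : p <> q ->
  cross (vsub q p) (vsub Z p) = 0 -> on_line p q Z.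
Proof.
  intros Hpq Hc. pose proof (pt_neq p q Hpq) as Hd.
  destruct p as [px py], q as [qx qy], Z as [zx zy]; simpl in *.
  unfold cross, vsub in Hc; simpl in Hc.
  set (D := (qx - px)^2 + (qy - py)^2) in *.
  assert (HD : D <> 0) by (apply Rgt_not_eq; exact Hd).
  exists (((zx - px)*(qx-px) + (zy-py)*(qy-py)) / D).
  unfold vadd, vscale, vsub; simpl. f_equal.
  - apply Rminus_diag_uniq.
    set (Nn := (zx - px) * (qx - px) + (zy - py) * (qy - py)).
    replace (zx - (px + Nn / D * (qx - px))) with ((zx*D - px*D - Nn*(qx-px))/D) by (field; exact HD).
    replace (zx*D - px*D - Nn*(qx-px)) with (-(qy-py)*((qx - px) * (zy - py) - (qy - py) * (zx - px))) by (unfold Nn, D; ring).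
    rewrite Hc; unfold Rdiv; ring.
  - apply Rminus_diag_uniq.
    set (Nn := (zx - px) * (qx - px) + (zy - py) * (qy - py)).
    replace (zy - (py + Nn / D * (qy - py))) with ((zy*D - py*D - Nn*(qy-py))/D) by (field; exact HD).
    replace (zy*D - py*D - Nn*(qy-py)) with ((qx-px)*((qx - px) * (zy - py) - (qy - py) * (zx - px))) by (unfold Nn, D; ring).
    rewrite Hc; unfold Rdiv; ring.
Qed.

Lemma disc_pos_not_unique (A B : R) (p q : pt) :
  A > 0 -> B > 0 -> p <> q ->
  let dx := fst q - fst p in let dy := snd q - snd p in
  let al := dx^2/A^2 + dy^2/B^2 in
  let be := 2*(fst p * dx/A^2 + snd p * dy/B^2) in
  let ga := fst p^2/A^2 + snd p^2/B^2 - 1 in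
  be^2 - 4*al*ga > 0 -> ~ line_tangent_to_ellipse A B p q.
Proof.
  intros HA HB Hpq dx dy al be ga HD [_ [X [[HX1 HX2] Hu]]].
  pose proof (pt_neq p q Hpq) as Hd. fold dx dy in Hd.
  assert (Hal : al > 0).
  { unfold al. assert (A^2>0) by nra. assert (B^2>0) by nra.
    assert (dx^2/A^2 >= 0). { unfold Rdiv. apply Rle_ge, Rmult_le_pos; [nra|]. left; apply Rinv_0_lt_compat; lra. }
    assert (dy^2/B^2 >= 0). { unfold Rdiv. apply Rle_ge, Rmult_le_pos; [nra|]. left; apply Rinv_0_lt_compat; lra. }
    destruct (Req_dec dx 0) as [E|E].
    - assert (dy <> 0) by (intro; subst; rewrite E in Hd; nra).
      assert (dy^2/B^2 > 0). { unfold Rdiv. apply Rmult_lt_0_compat; [apply sq_pos; auto|]. apply Rinv_0_lt_compat; lra. } lra.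
    - assert (dx^2/A^2 > 0). { unfold Rdiv. apply Rmult_lt_0_compat; [apply sq_pos; auto|]. apply Rinv_0_lt_compat; lra. } lra. }
  set (sD := sqrt (be^2 - 4*al*ga)).
  assert (HsD : sD * sD = be^2 - 4*al*ga) by (apply sqrt_sqrt; lra).
  assert (HsDp : sD > 0) by (apply sqrt_lt_R0; lra).
  set (s1 := (- be + sD)/(2*al)). set (s2 := (- be - sD)/(2*al)).
  assert (Hr : forall s, al*s^2 + be*s + ga = 0 -> on_line p q (vadd p (vscale s (vsub q p))) /\ on_ellipse A B (vadd p (vscale s (vsub q p)))).
  { intros s Hs. split; [exists s; reflexivity|].
    unfold on_ellipse, vadd, vscale, vsub; simpl. fold dx dy.
    apply Rminus_diag_uniq. rewrite <- Hs. unfold al, be, ga. field; nz. }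
  assert (E1 : al*s1^2 + be*s1 + ga = 0).
  { unfold s1. field_simplify; [|lra]. replace (sD^2) with (be^2 - 4*al*ga) by (rewrite <- HsD; ring). field_simplify; [|lra]. lra. }
  assert (E2 : al*s2^2 + be*s2 + ga = 0).
  { unfold s2. field_simplify; [|lra]. replace (sD^2) with (be^2 - 4*al*ga) by (rewrite <- HsD; ring). field_simplify; [|lra]. lra. }
  pose proof (Hu _ (Hr _ E1)) as U1. pose proof (Hu _ (Hr _ E2)) as U2.
  rewrite U1 in U2. unfold vadd, vscale, vsub in U2. injection U2; fold dx dy. intros Hy Hx.
  assert (Hs : s1 = s2).
  { destruct (Req_dec dx 0) as [E|E].
    - assert (dy <> 0) by (intro; subst; rewrite E in Hd; nra).
      apply (Rmult_eq_reg_r dy); auto; lra.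
    - apply (Rmult_eq_reg_r dx); auto; lra. }
  unfold s1, s2 in Hs. assert (sD = 0).
  { apply (Rmult_eq_reg_r (/(2*al))); [|apply Rinv_neq_0_compat; lra]. lra. }
  lra.
Qed.

Lemma al_pos (A B : R) (p q : pt) : A > 0 -> B > 0 -> p <> q ->
  (fst q - fst p)^2/A^2 + (snd q - snd p)^2/B^2 > 0.
Proof.
  intros HA HB Hpq. pose proof (pt_neq p q Hpq) as Hd.
  set (dx := fst q - fst p) in *. set (dy := snd q - snd p) in *.
    assert (A^2>0) by nra. assert (B^2>0) by nra.
    assert (dx^2/A^2 >= 0). { unfold Rdiv. apply Rle_ge, Rmult_le_pos; [nra|]. left; apply Rinv_0_lt_compat; lra. }
    assert (dy^2/B^2 >= 0). { unfold Rdiv. apply Rle_ge, Rmult_le_pos; [nra|]. left; apply Rinv_0_lt_compat; lra. }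
    destruct (Req_dec dx 0) as [E|E].
    - assert (dy <> 0) by (intro; subst; rewrite E in Hd; nra).
      assert (dy^2/B^2 > 0). { unfold Rdiv. apply Rmult_lt_0_compat; [apply sq_pos; auto|]. apply Rinv_0_lt_compat; lra. } lra.
    - assert (dx^2/A^2 > 0). { unfold Rdiv. apply Rmult_lt_0_compat; [apply sq_pos; auto|]. apply Rinv_0_lt_compat; lra. } lra.
Qed.

Lemma IPL (A B : R) (p q Z : pt) : A > 0 -> B > 0 -> p <> q -> on_line p q Z ->
  fst Z^2/A^2 + snd Z^2/B^2 < 1 -> ~ line_tangent_to_ellipse A B p q.
Proof.
  intros HA HB Hpq [s0 HZ] HZ1.
  pose proof (al_pos A B p q HA HB Hpq) as Hal.
  set (dx := fst q - fst p) in *. set (dy := snd q - snd p) in *.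
  set (al := dx^2/A^2 + dy^2/B^2) in *.
  set (be := 2*(fst p * dx/A^2 + snd p * dy/B^2)).
  set (ga := fst p^2/A^2 + snd p^2/B^2 - 1).
  assert (Hf : al*s0^2 + be*s0 + ga < 0).
  { subst Z. unfold vadd, vscale, vsub in HZ1; cbn [fst snd] in HZ1. fold dx dy in HZ1.
    replace (al*s0^2 + be*s0 + ga) with ((fst p + s0 * dx) ^ 2 / A ^ 2 + (snd p + s0 * dy) ^ 2 / B ^ 2 - 1); [lra|].
    unfold al, be, ga. field; nz. }
  assert (Hpos : be^2 - 4*al*ga > 0).
  { replace (be^2 - 4*al*ga) with ((2*al*s0+be)^2 - 4*al*(al*s0^2 + be*s0 + ga)) by ring.
    assert (Hg: 0 < al * -(al*s0^2 + be*s0 + ga)).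
    { apply Rmult_lt_0_compat. exact Hal. lra. }
    assert (0 <= (2*al*s0+be)^2) by apply pow2_ge_0. lra. }
  exact (disc_pos_not_unique A B p q HA HB Hpq Hpos).
Qed.

Lemma TangRel (A B : R) (p q : pt) : A > 0 -> B > 0 ->
  line_tangent_to_ellipse A B p q ->
  A^2*(snd q - snd p)^2 + B^2*(fst q - fst p)^2 = (cross p q)^2.
Proof.
  intros HA HB Ht. pose proof Ht as [Hpq [X [[[s0 HX] HX2] _]]].
  pose proof (al_pos A B p q HA HB Hpq) as Hal.
  set (dx := fst q - fst p) in *. set (dy := snd q - snd p) in *.
  set (al := dx^2/A^2 + dy^2/B^2) in *.
  set (be := 2*(fst p * dx/A^2 + snd p * dy/B^2)).
  set (ga := fst p^2/A^2 + snd p^2/B^2 - 1).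
  assert (Hf : al*s0^2 + be*s0 + ga = 0).
  { subst X. unfold on_ellipse, vadd, vscale, vsub in HX2; cbn [fst snd] in HX2. fold dx dy in HX2.
    transitivity (((fst p + s0*dx)^2/A^2 + (snd p + s0*dy)^2/B^2) - 1).
    { unfold al, be, ga. field; nz. }
    rewrite HX2; ring. }
  assert (HD0 : be^2 - 4*al*ga = 0).
  { destruct (Rlt_or_le 0 (be^2 - 4*al*ga)) as [Hp|Hn].
    - exfalso. exact (disc_pos_not_unique A B p q HA HB Hpq Hp Ht).
    - assert (be^2 - 4*al*ga = (2*al*s0+be)^2 - 4*al*(al*s0^2 + be*s0 + ga)) by ring.
      rewrite Hf in H. assert (0 <= (2*al*s0+be)^2) by apply pow2_ge_0. lra. }
  assert (HDe : be^2 - 4*al*ga = 4*(B^2*dx^2 + A^2*dy^2 - (cross p q)^2)/(A^2*B^2)).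
  { unfold al, be, ga, cross, dx, dy. destruct p, q; simpl. field; nz. }
  rewrite HDe in HD0.
  assert (A^2*B^2 > 0) by (apply Rmult_lt_0_compat; nra).
  assert (B^2*dx^2 + A^2*dy^2 - (cross p q)^2 = 0).
  { apply (Rmult_eq_reg_r (4/(A^2*B^2))). rewrite Rmult_0_l. rewrite <- HD0. field. lra.
    apply Rgt_not_eq. unfold Rdiv. apply Rmult_lt_0_compat; [lra|]. apply Rinv_0_lt_compat; lra. }
  lra.
Qed.

Definition qf (A B : R) (X : pt) := fst X^2/A^2 + snd X^2/B^2.

Lemma chord_param (A B : R) (X Y : pt) (s : R) : A > 0 -> B > 0 ->
  qf A B (vadd X (vscale s (vsub Y X))) =
  ((fst Y - fst X)^2/A^2 + (snd Y - snd X)^2/B^2) * s * (s - 1) + s * qf A B Y + (1 - s) * qf A B X.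
Proof. intros. unfold qf, vadd, vscale, vsub; destruct X, Y; cbn [fst snd]. field; nz. Qed.

Lemma NC3 (a b : R) (X Y Z : pt) : a > 0 -> b > 0 ->
  on_ellipse a b X -> on_ellipse a b Y -> on_ellipse a b Z ->
  X <> Y -> X <> Z -> Y <> Z -> cross (vsub Y X) (vsub Z X) = 0 -> False.
Proof.
  intros Ha Hb HX HY HZ Hxy Hxz Hyz Hc.
  destruct (collinear_on_line X Y Z Hxy Hc) as [s Hs].
  pose proof (chord_param a b X Y s Ha Hb) as Hq.
  pose proof (al_pos a b X Y Ha Hb Hxy) as Hal.
  unfold on_ellipse in *. fold (qf a b X) (qf a b Y) (qf a b Z) in *.
  rewrite <- Hs, HX, HY, HZ in Hq.
  assert (Hs0 : s * (s - 1) = 0).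
  { set (al := (fst Y - fst X) ^ 2 / a ^ 2 + (snd Y - snd X) ^ 2 / b ^ 2) in *.
    apply (Rmult_eq_reg_l al); [|lra]. lra. }
  destruct (Rmult_integral _ _ Hs0) as [E|E].
  - apply Hxz. rewrite Hs, E. unfold vadd, vscale, vsub; destruct X; cbn [fst snd]. f_equal; ring.
  - apply Hyz. rewrite Hs. assert (s = 1) by lra. subst s. unfold vadd, vscale, vsub; destruct X, Y; cbn [fst snd]. f_equal; ring.
Qed.

Lemma caustic_inside (a b A B : R) (K : pt) : 0 < A < a -> 0 < B < b ->
  qf A B K = 1 -> qf a b K < 1.
Proof.
  intros HA HB HK. unfold qf in *. destruct K as [x y]; cbn [fst snd] in *.
  assert (E1 : x^2/a^2 = x^2/A^2 * (A^2/a^2)) by (field; nz).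
  assert (E2 : y^2/b^2 = y^2/B^2 * (B^2/b^2)) by (field; nz).
  assert (F1 : A^2/a^2 < 1). { unfold Rdiv. apply (Rmult_lt_reg_r (a^2)). nra. rewrite Rmult_assoc, Rinv_l, Rmult_1_r, Rmult_1_l. nra. apply Rgt_not_eq; nra. }
  assert (F2 : B^2/b^2 < 1). { unfold Rdiv. apply (Rmult_lt_reg_r (b^2)). nra. rewrite Rmult_assoc, Rinv_l, Rmult_1_r, Rmult_1_l. nra. apply Rgt_not_eq; nra. }
  assert (G1 : 0 <= x^2/A^2). { unfold Rdiv. apply Rmult_le_pos; [nra|]. left; apply Rinv_0_lt_compat; nra. }
  assert (G2 : 0 <= y^2/B^2). { unfold Rdiv. apply Rmult_le_pos; [nra|]. left; apply Rinv_0_lt_compat; nra. }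
  assert (0 <= A^2/a^2). { unfold Rdiv. apply Rmult_le_pos; [nra|]. left; apply Rinv_0_lt_compat; nra. }
  assert (0 <= B^2/b^2). { unfold Rdiv. apply Rmult_le_pos; [nra|]. left; apply Rinv_0_lt_compat; nra. }
  rewrite E1, E2.
  set (u := x^2/A^2) in *. set (v := y^2/B^2) in *. set (al := A^2/a^2) in *. set (be := B^2/b^2) in *.
  assert (0 <= v * (1 - be)) by (apply Rmult_le_pos; lra).
  assert (0 <= u * (1 - al)) by (apply Rmult_le_pos; lra).
  destruct (Rlt_or_le 0 u).
  - assert (0 < u * (1 - al)) by (apply Rmult_lt_0_compat; lra). lra.
  - assert (Hu0 : u = 0) by lra. assert (Hv1 : v = 1) by lra. rewrite Hu0, Hv1. lra.
Qed.

Lemma SideL (A B : R) (p q K : pt) : A > 0 -> B > 0 ->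
  line_tangent_to_ellipse A B p q -> qf A B K = 1 ->
  cross (vsub q p) (vsub K p) * cross p q >= 0.
Proof.
  intros HA HB Ht HK. destruct (Rlt_or_le (cross (vsub q p) (vsub K p) * cross p q) 0) as [Hn|]; [|lra].
  exfalso.
  set (cK := cross (vsub q p) (vsub K p)) in *. set (cO := cross p q) in *.
  assert (Hne : cO - cK <> 0).
  { intro E. assert (cO = cK) by lra. rewrite H in Hn. nra. }
  set (l := cO / (cO - cK)).
  assert (Hl : 0 < l < 1).
  { unfold l. destruct (Rlt_or_le 0 cO).
    - assert (cK < 0) by nra. split.
      + apply Rdiv_lt_0_compat; lra.
      + apply (Rmult_lt_reg_r (cO - cK)); [lra|]. unfold Rdiv. rewrite Rmult_assoc, Rinv_l; [lra|auto].
    - assert (cO < 0). { destruct (Req_dec cO 0) as [E|E]; [rewrite E in Hn; lra|lra]. }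
      assert (cK > 0) by nra.
      replace (cO / (cO - cK)) with ((-cO)/(cK - cO)) by (field; split; lra).
      split.
      + apply Rdiv_lt_0_compat; lra.
      + apply (Rmult_lt_reg_r (cK - cO)); [lra|]. unfold Rdiv. rewrite Rmult_assoc, Rinv_l; [lra|]. apply Rgt_not_eq; lra. }
  set (Z := (l * fst K, l * snd K)).
  assert (HZl : on_line p q Z).
  { apply collinear_on_line; [exact (proj1 Ht)|].
    assert (Ecross : cross (vsub q p) (vsub Z p) = l * (cK - cO) + cO).
    { unfold cK, cO, Z, cross, vsub. destruct p, q, K; cbn [fst snd]. ring. }
    rewrite Ecross. unfold l. field. auto. }
  assert (HZq : fst Z^2/A^2 + snd Z^2/B^2 < 1).
  { unfold Z; cbn [fst snd]. unfold qf in HK.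
    replace ((l * fst K) ^ 2 / A ^ 2 + (l * snd K) ^ 2 / B ^ 2) with (l^2 * (fst K ^ 2 / A ^ 2 + snd K ^ 2 / B ^ 2)) by (field; nz).
    rewrite HK. nra. }
  exact (IPL A B p q Z HA HB (proj1 Ht) HZl HZq Ht).
Qed.

Lemma caustic_small (a b A B : R) (p q : pt) : a > 0 -> b > 0 -> A > B -> B > 0 ->
  A^2 - B^2 = a^2 - b^2 -> on_ellipse a b p -> on_ellipse a b q ->
  line_tangent_to_ellipse A B p q -> A < a /\ B < b.
Proof.
  intros Ha Hb HAB HB Hc Hp Hq Ht.
  assert (HAa : A < a).
  { destruct (Rlt_or_le A a) as [|HAa]; [auto|exfalso].
    assert (HBb : b <= B) by nra.
    set (M := vadd p (vscale (1/2) (vsub q p))).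
    assert (HM : qf a b M < 1).
    { unfold M. rewrite chord_param by lra. unfold on_ellipse in Hp, Hq. fold (qf a b p) (qf a b q) in *.
      rewrite Hp, Hq. pose proof (al_pos a b p q Ha Hb (proj1 Ht)). nra. }
    assert (HM2 : fst M^2/A^2 + snd M^2/B^2 < 1).
    { unfold qf in HM.
      assert (fst M^2/A^2 <= fst M^2/a^2).
      { unfold Rdiv. apply Rmult_le_compat_l; [nra|]. apply Rinv_le_contravar; nra. }
      assert (snd M^2/B^2 <= snd M^2/b^2).
      { unfold Rdiv. apply Rmult_le_compat_l; [nra|]. apply Rinv_le_contravar; nra. }
      lra. }
    apply (IPL A B p q M); try lra. exact (proj1 Ht). exists (1/2); reflexivity. exact Ht. }
  split; [auto|]. nra.
Qed.

Lemma sin_zero_small (z : R) : - PI < z < PI -> sin z = 0 -> z = 0.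
Proof.
  intros [H1 H2] Hs. destruct (Rtotal_order z 0) as [Hl|[He|Hg]]; auto.
  - assert (0 < sin (-z)) by (apply sin_gt_0; lra). rewrite sin_neg in H. lra.
  - assert (0 < sin z) by (apply sin_gt_0; lra). lra.
Qed.

Lemma SL (K m n t1 t2 : R) : 0 < t1 < PI -> 0 < t2 < PI -> K + m > 0 -> K - m < 0 ->
  K + m * cos t1 + n * sin t1 = 0 -> K + m * cos t2 + n * sin t2 = 0 -> t1 = t2.
Proof.
  intros Ht1 Ht2 Hp Hm E1 E2.
  pose proof PI_RGT_0.
  set (h1 := t1/2). set (h2 := t2/2).
  assert (R1 : t1 = 2*h1) by (unfold h1; field). assert (R2 : t2 = 2*h2) by (unfold h2; field).
  rewrite R1 in E1. rewrite R2 in E2. rewrite cos_2a, sin_2a in E1, E2.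
  assert (S1 : 0 < sin h1) by (apply sin_gt_0; unfold h1; lra).
  assert (S2 : 0 < sin h2) by (apply sin_gt_0; unfold h2; lra).
  assert (C1 : 0 < cos h1) by (apply cos_gt_0; unfold h1; lra).
  assert (C2 : 0 < cos h2) by (apply cos_gt_0; unfold h2; lra).
  pose proof (sin2_cos2 h1) as P1. pose proof (sin2_cos2 h2) as P2. unfold Rsqr in P1, P2.
  set (s1 := sin h1) in *. set (s2 := sin h2) in *. set (c1 := cos h1) in *. set (c2 := cos h2) in *.
  assert (F1 : (K+m)*c1*c1 + 2*n*s1*c1 + (K-m)*s1*s1 = 0).
  { transitivity (K*(s1*s1+c1*c1) + m*(c1*c1 - s1*s1) + n*(2*s1*c1)); [ring|]. rewrite P1. lra. }
  assert (F2 : (K+m)*c2*c2 + 2*n*s2*c2 + (K-m)*s2*s2 = 0).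
  { transitivity (K*(s2*s2+c2*c2) + m*(c2*c2 - s2*s2) + n*(2*s2*c2)); [ring|]. rewrite P2. lra. }
  assert (Fz : (c1*s2 - c2*s1) * ((K+m)*c1*c2 - (K-m)*s1*s2) = 0).
  { transitivity (((K+m)*c1*c1 + 2*n*s1*c1 + (K-m)*s1*s1) * (s2*c2) - ((K+m)*c2*c2 + 2*n*s2*c2 + (K-m)*s2*s2)*(s1*c1)); [ring|].
    rewrite F1, F2; ring. }
  assert (Pos : (K+m)*c1*c2 - (K-m)*s1*s2 > 0).
  { assert (0 < (K+m)*c1*c2) by (apply Rmult_lt_0_compat; [apply Rmult_lt_0_compat|]; lra).
    assert (0 < -(K-m)*s1*s2) by (apply Rmult_lt_0_compat; [apply Rmult_lt_0_compat|]; lra). lra. }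
  assert (Z : c1*s2 - c2*s1 = 0).
  { destruct (Rmult_integral _ _ Fz) as [|E]; auto. lra. }
  assert (Hs : sin (h2 - h1) = 0) by (rewrite sin_minus; fold s1 s2 c1 c2; lra).
  apply sin_zero_small in Hs; [|unfold h1, h2; lra].
  lra.
Qed.

Definition G (a b A B x y : R) := a^2*b^2*(1+cos(y-x)) - A^2*b^2*(1+cos(x+y)) - B^2*a^2*(1-cos(x+y)).

Lemma G_cont1 a b A B x : continuity (fun y => G a b A B x y).
Proof. apply derivable_continuous. unfold G. reg. Qed.
Lemma G_cont2 a b A B y : continuity (fun x => G a b A B x y).
Proof. apply derivable_continuous. unfold G. reg. Qed.

Section GS.
Variables a b A B : R.
Hypotheses (HA : 0 < A < a) (HB : 0 < B < b).

Lemma G_diag x : G a b A B x x > 0.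
Proof.
  unfold G. replace (x - x) with 0 by ring. rewrite cos_0.
  pose proof (COS_bound (x+x)) as [c1 c2].
  set (c := cos (x+x)) in *.
  assert (h1 : A^2*b^2 < a^2*b^2) by (apply Rmult_lt_compat_r; nra).
  assert (h2 : B^2*a^2 < a^2*b^2) by (rewrite (Rmult_comm (a^2)); apply Rmult_lt_compat_r; nra).
  assert (0 <= (a^2*b^2 - A^2*b^2)*(1+c)) by (apply Rmult_le_pos; lra).
  assert (0 <= (a^2*b^2 - B^2*a^2)*(1-c)) by (apply Rmult_le_pos; lra).
  destruct (Rlt_or_le 0 (1+c)).
  - assert (0 < (a^2*b^2 - A^2*b^2)*(1+c)) by (apply Rmult_lt_0_compat; lra). nra.
  - assert (0 < (a^2*b^2 - B^2*a^2)*(1-c)) by (apply Rmult_lt_0_compat; lra). nra.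
Qed.

Lemma G_pi x : G a b A B x (x + PI) < 0.
Proof.
  unfold G. replace (x + PI - x) with PI by ring. rewrite cos_PI.
  pose proof (COS_bound (x+(x+PI))) as [c1 c2].
  set (c := cos (x+(x+PI))) in *.
  assert (h1 : 0 < A^2*b^2) by (apply Rmult_lt_0_compat; nra).
  assert (h2 : 0 < B^2*a^2) by (apply Rmult_lt_0_compat; nra).
  assert (0 <= (A^2*b^2)*(1+c)) by (apply Rmult_le_pos; lra).
  assert (0 <= (B^2*a^2)*(1-c)) by (apply Rmult_le_pos; lra).
  destruct (Rlt_or_le 0 (1+c)).
  - assert (0 < (A^2*b^2)*(1+c)) by (apply Rmult_lt_0_compat; lra). nra.
  - assert (0 < (B^2*a^2)*(1-c)) by (apply Rmult_lt_0_compat; lra). nra.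
Qed.
End GS.

Lemma G_shift a b A B x y : G a b A B (x+PI) (y+PI) = G a b A B x y.
Proof.
  unfold G. replace (y + PI - (x + PI)) with (y - x) by ring.
  replace (x + PI + (y + PI)) with ((x + y) + 2 * INR 1 * PI) by (simpl; ring).
  rewrite cos_period. ring.
Qed.

Lemma G_fwd a b A B x th : G a b A B x (x + th) =
  (a^2*b^2 - A^2*b^2 - B^2*a^2) + (a^2*b^2 - (A^2*b^2 - B^2*a^2)*cos (2*x)) * cos th
  + ((A^2*b^2 - B^2*a^2)*sin (2*x)) * sin th.
Proof.
  unfold G. replace (x + th - x) with th by ring. replace (x + (x + th)) with (2*x + th) by ring.
  rewrite cos_plus. ring.
Qed.

Lemma G_bwd a b A B y th : G a b A B (y - th) y =
  (a^2*b^2 - A^2*b^2 - B^2*a^2) + (a^2*b^2 - (A^2*b^2 - B^2*a^2)*cos (2*y)) * cos th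
  + (-(A^2*b^2 - B^2*a^2)*sin (2*y)) * sin th.
Proof.
  unfold G. replace (y - (y - th)) with th by ring. replace (y - th + y) with (2*y - th) by ring.
  rewrite cos_minus. ring.
Qed.

Definition V (a b A B x y : R) := x < y < x + PI /\ G a b A B x y = 0.

Section VS.
Variables a b A B : R.
Hypotheses (HA : 0 < A < a) (HB : 0 < B < b).

Lemma FU x y1 y2 : V a b A B x y1 -> V a b A B x y2 -> y1 = y2.
Proof.
  intros [H1 E1] [H2 E2].
  set (K := a^2*b^2 - A^2*b^2 - B^2*a^2).
  set (m := a^2*b^2 - (A^2*b^2 - B^2*a^2)*cos (2*x)).
  set (n := (A^2*b^2 - B^2*a^2)*sin (2*x)).
  assert (Kp : K + m > 0).
  { pose proof (G_diag a b A B HA HB x) as D. replace x with (x + 0) in D at 2 by ring.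
    rewrite G_fwd, cos_0, sin_0 in D. fold K m n in D. lra. }
  assert (Km : K - m < 0).
  { pose proof (G_pi a b A B HA HB x) as D.
    rewrite G_fwd, cos_PI, sin_PI in D. fold K m n in D. lra. }
  replace y1 with (x + (y1 - x)) in E1 by ring. replace y2 with (x + (y2 - x)) in E2 by ring.
  rewrite G_fwd in E1, E2. fold K m n in E1, E2.
  assert (y1 - x = y2 - x) by (apply (SL K m n); auto; lra). lra.
Qed.

Lemma BU x1 x2 y : V a b A B x1 y -> V a b A B x2 y -> x1 = x2.
Proof.
  intros [H1 E1] [H2 E2].
  set (K := a^2*b^2 - A^2*b^2 - B^2*a^2).
  set (m := a^2*b^2 - (A^2*b^2 - B^2*a^2)*cos (2*y)).
  set (n := -(A^2*b^2 - B^2*a^2)*sin (2*y)).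
  assert (Kp : K + m > 0).
  { pose proof (G_diag a b A B HA HB y) as D. replace y with (y - 0) in D at 1 by ring.
    rewrite G_bwd, cos_0, sin_0 in D. fold K m n in D. lra. }
  assert (Km : K - m < 0).
  { pose proof (G_pi a b A B HA HB (y - PI)) as D. replace (y - PI + PI) with y in D by ring.
    rewrite G_bwd, cos_PI, sin_PI in D. fold K m n in D. lra. }
  replace x1 with (y - (y - x1)) in E1 by ring. replace x2 with (y - (y - x2)) in E2 by ring.
  rewrite G_bwd in E1, E2. fold K m n in E1, E2.
  assert (y - x1 = y - x2) by (apply (SL K m n); auto; lra). lra.
Qed.

Lemma Fneg x y z : V a b A B x y -> y < z < x + PI -> G a b A B x z < 0.
Proof.
  intros Hv Hz. destruct (Rlt_or_le (G a b A B x z) 0) as [|Hge]; auto. exfalso.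
  destruct Hv as [Hxy Ey].
  destruct (Req_dec (G a b A B x z) 0) as [E|E].
  - assert (y = z) by (apply (FU x); split; auto; lra). lra.
  - assert (Hgt : G a b A B x z > 0) by lra.
    pose proof (G_pi a b A B HA HB x) as Hpi.
    destruct (IVT (fun w => - G a b A B x w) z (x + PI)) as [w [Hw Ew]].
    + apply continuity_opp. apply G_cont1.
    + lra.
    + lra.
    + lra.
    + assert (Ew' : G a b A B x w = 0) by lra.
      assert (w <> x + PI) by (intro; subst w; lra).
      assert (y = w) by (apply (FU x); split; auto; lra). lra.
Qed.

Lemma Bpos x y z : V a b A B x y -> x < z < y -> G a b A B z y > 0.
Proof.
  intros Hv Hz. destruct (Rlt_or_le 0 (G a b A B z y)) as [|Hle]; auto. exfalso.
  destruct Hv as [Hxy Ey].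
  destruct (Req_dec (G a b A B z y) 0) as [E|E].
  - assert (x = z) by (apply (BU x z y); split; auto; lra). lra.
  - pose proof (G_diag a b A B HA HB y) as Hd.
    destruct (IVT (fun w => G a b A B w y) z y) as [w [Hw Ew]].
    + apply G_cont2.
    + lra.
    + lra.
    + lra.
    + assert (w <> y) by (intro; subst w; lra).
      assert (x = w) by (apply (BU x w y); split; auto; lra). lra.
Qed.

Lemma Mono x y x' y' : V a b A B x y -> V a b A B x' y' -> x < x' < y -> y < y'.
Proof.
  intros Hv Hv' Hx.
  destruct (Rtotal_order y y') as [|[E|Hg]]; auto; exfalso.
  - subst y'. assert (x = x') by (apply (BU x x' y); auto). lra.
  - pose proof Hv as [[H1 H2] _]. pose proof Hv' as [[H1' H2'] _].
    assert (G a b A B x' y < 0) by (apply (Fneg x' y'); auto; lra).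
    assert (G a b A B x' y > 0) by (apply (Bpos x y); auto).
    lra.
Qed.
End VS.

Section IDX.
Variables a b A B : R.
Hypotheses (HA : 0 < A < a) (HB : 0 < B < b).
Variable N : nat.
Variable t : nat -> R.
Hypothesis Hv : forall i, V a b A B (t i) (t (S i)).
Hypothesis Hper : forall i, t (i + N)%nat = t i + 2*PI.

Lemma t_mono i j : (i < j)%nat -> t i < t j.
Proof.
  intros H. induction H.
  - apply (Hv i).
  - pose proof (proj1 (Hv m)). lra.
Qed.

Lemma t_inj i j : t i = t j -> i = j.
Proof.
  intros E. destruct (Nat.lt_trichotomy i j) as [H|[H|H]]; auto.
  - apply t_mono in H; lra.
  - apply t_mono in H; lra.
Qed.

Lemma t_lt i j : t i < t j -> (i < j)%nat.
Proof.
  intros E. destruct (Nat.lt_trichotomy i j) as [H|[H|H]]; auto.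
  - subst; lra.
  - apply t_mono in H; lra.
Qed.

Lemma find_k (c : R) n : t 0 <= c -> c < t n -> exists k, t k <= c < t (S k).
Proof.
  induction n; intros H1 H2; [lra|].
  destruct (Rlt_or_le c (t n)) as [H|H].
  - apply IHn; auto.
  - exists n; auto.
Qed.

Lemma sV j : V a b A B (t j + PI) (t (S j) + PI).
Proof.
  destruct (Hv j) as [H1 H2]. split; [lra|]. rewrite G_shift. auto.
Qed.

Lemma symmetry_index : Nat.Even N -> exists k, N = (k + k)%nat /\ forall i, t (k + i)%nat = t i + PI.
Proof.
  intros [h Hh].
  assert (HN : t N = t 0 + 2*PI) by (rewrite <- (Hper 0); f_equal).
  pose proof PI_RGT_0.
  destruct (find_k (t 0 + PI) N) as [k [Hk1 Hk2]]; [lra|lra|].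
  destruct (Req_dec (t k) (t 0 + PI)) as [E|E].
  - assert (Hj : forall j, t j + PI = t (k + j)%nat).
    { induction j.
      + rewrite Nat.add_0_r. lra.
      + replace (k + S j)%nat with (S (k + j)) by lia.
        apply (FU a b A B HA HB (t j + PI)). apply sV. rewrite IHj. apply Hv. }
    exists k. split.
    + apply t_inj. rewrite HN. rewrite <- Hj. lra.
    + intros i. rewrite <- Hj. auto.
  - exfalso.
    assert (Hj : forall j, t (k + j)%nat < t j + PI < t (k + j + 1)%nat).
    { induction j.
      + rewrite !Nat.add_0_r. replace (k+1)%nat with (S k) by lia. lra.
      + destruct IHj as [I1 I2].
        assert (J1 : t (k + j + 1)%nat < t (S j) + PI).
        { apply (Mono a b A B HA HB (t (k+j)%nat) (t (k+j+1)%nat) (t j + PI) (t (S j) + PI)).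
          - replace (k+j+1)%nat with (S (k+j)) by lia. apply Hv.
          - apply sV.
          - lra. }
        split.
        * replace (k + S j)%nat with (k + j + 1)%nat by lia. exact J1.
        * replace (k + S j + 1)%nat with (S (k + j + 1)) by lia.
          apply (Mono a b A B HA HB (t j + PI) (t (S j) + PI) (t (k+j+1)%nat) (t (S (k+j+1)))).
          -- apply sV.
          -- apply Hv.
          -- lra. }
    destruct (Hj 0%nat) as [J01 J02]. destruct (Hj k) as [Jk1 Jk2].
    destruct (Hj (k+1)%nat) as [Jk3 Jk4].
    rewrite Nat.add_0_r in J01, J02.
    assert (L1 : t (k + k)%nat < t N) by lra.
    assert (L2 : t N < t (k + (k + 1) + 1)%nat) by lra.
    apply t_lt in L1. apply t_lt in L2. lia.
Qed.
End IDX.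

Lemma sin_pos_range z : - PI < z < 2*PI -> sin z > 0 -> 0 < z < PI.
Proof.
  intros [H1 H2] Hs. pose proof PI_RGT_0. split.
  - destruct (Rlt_or_le 0 z) as [Q|Q]; auto. assert (W : 0 <= sin (-z)) by (apply sin_ge_0; lra).
    rewrite sin_neg in W. lra.
  - destruct (Rlt_or_le z PI) as [Q|Q]; auto. assert (W : 0 <= sin (z - PI)) by (apply sin_ge_0; lra).
    pose proof (neg_sin (z - PI)) as E. replace (z - PI + PI) with z in E by ring. lra.
Qed.

Lemma sin0_cos (z : R) : 0 < z < 2*PI -> sin z = 0 -> cos z = -1.
Proof.
  intros Hz Hs. pose proof (neg_sin (z - PI)) as E. replace (z - PI + PI) with z in E by ring.
  assert (Hs' : sin (z - PI) = 0) by lra.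
  apply sin_zero_small in Hs'; [|lra]. replace z with PI by lra. apply cos_PI.
Qed.

Lemma cos_lt_1 (z : R) : 0 < z < PI -> cos z < 1.
Proof.
  intros Hz. replace z with (2*(z/2)) by field. rewrite cos_2a_sin.
  assert (0 < sin (z/2)) by (apply sin_gt_0; lra). nra.
Qed.

Definition kap (a b : R) (X : pt) (ph : R) := (fst X/a)*cos ph + (snd X/b)*sin ph.
Definition nuu (a b : R) (X : pt) (ph : R) := (snd X/b)*cos ph - (fst X/a)*sin ph.
Definition tpar (a b : R) (X : pt) (ph : R) := ph + atan (nuu a b X ph / kap a b X ph).

Lemma tpar_period a b X ph : tpar a b X (ph + 2*PI) = tpar a b X ph + 2*PI.
Proof.
  unfold tpar, kap, nuu.
  replace (ph + 2*PI) with (ph + 2 * INR 1 * PI) by (simpl; ring).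
  rewrite cos_period, sin_period. simpl. ring.
Qed.

Lemma tpar_spec a b (X : pt) r ph : a > 0 -> b > 0 -> r > 0 -> on_ellipse a b X ->
  X = (r * cos ph, r * sin ph) ->
  a * cos (tpar a b X ph) = fst X /\ b * sin (tpar a b X ph) = snd X /\
  - PI/2 < tpar a b X ph - ph < PI/2.
Proof.
  intros Ha Hb Hr HX HP.
  set (k := kap a b X ph). set (n := nuu a b X ph).
  pose proof (sin2_cos2 ph) as Pc. unfold Rsqr in Pc.
  assert (Hk : k > 0).
  { unfold k, kap. rewrite HP; cbn [fst snd].
    replace (r * cos ph / a * cos ph + r * sin ph / b * sin ph) with (r * (cos ph^2 / a + sin ph^2/b)) by (field; nz).
    apply Rmult_lt_0_compat; auto.
    assert (0 <= cos ph^2/a) by (unfold Rdiv; apply Rmult_le_pos; [nra|left; apply Rinv_0_lt_compat; lra]).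
    assert (0 <= sin ph^2/b) by (unfold Rdiv; apply Rmult_le_pos; [nra|left; apply Rinv_0_lt_compat; lra]).
    destruct (Req_dec (cos ph) 0) as [E|E].
    - assert (sin ph ^2 > 0) by (rewrite <- (Rmult_1_r (sin ph ^ 2)); nra).
      assert (0 < sin ph^2/b) by (unfold Rdiv; apply Rmult_lt_0_compat; [lra|apply Rinv_0_lt_compat; lra]). lra.
    - assert (cos ph ^2 > 0) by (apply sq_pos; auto).
      assert (0 < cos ph^2/a) by (unfold Rdiv; apply Rmult_lt_0_compat; [lra|apply Rinv_0_lt_compat; lra]). lra. }
  assert (Hkn : k^2 + n^2 = 1).
  { unfold k, n, kap, nuu. unfold on_ellipse in HX.
    transitivity ((fst X ^2/a^2 + snd X^2/b^2) * (sin ph * sin ph + cos ph * cos ph)); [field; nz|].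
    rewrite HX, Pc. ring. }
  assert (Hsq : sqrt (1 + (n/k)²) = 1/k).
  { replace (1 + (n/k)²) with ((1/k)*(1/k)) by (unfold Rsqr; transitivity ((k^2+n^2)/(k*k)); [rewrite Hkn; field; nz|field; nz]).
    apply sqrt_square. left. unfold Rdiv; rewrite Rmult_1_l; apply Rinv_0_lt_compat; lra. }
  assert (Hcd : cos (atan (n/k)) = k) by (rewrite cos_atan, Hsq; field; nz).
  assert (Hsd : sin (atan (n/k)) = n) by (rewrite sin_atan, Hsq; field; nz).
  unfold tpar. fold k n. rewrite cos_plus, sin_plus, Hcd, Hsd.
  pose proof (atan_bound (n/k)).
  repeat split; try lra.
  - unfold k, n, kap, nuu. transitivity (fst X * (sin ph * sin ph + cos ph * cos ph)); [field; nz|]. rewrite Pc; ring.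
  - unfold k, n, kap, nuu. transitivity (snd X * (sin ph * sin ph + cos ph * cos ph)); [field; nz|]. rewrite Pc; ring.
Qed.

Lemma idt (a b A B cx sx cy sy : R) : cx^2 + sx^2 = 1 -> cy^2+sy^2 = 1 ->
  A^2*(b*sy - b*sx)^2 + B^2*(a*cy - a*cx)^2 - (a*b*(sy*cx - cy*sx))^2 =
  -(1 - (cy*cx + sy*sx)) * (a^2*b^2*(1+(cy*cx + sy*sx)) - A^2*b^2*(1+(cx*cy - sx*sy)) - B^2*a^2*(1-(cx*cy - sx*sy))).
Proof.
  intros Hx Hy.
  assert (E1 : (sy - sx)^2 = (1 - (cy*cx + sy*sx))*(1 + (cx*cy - sx*sy))).
  { transitivity ((1 - (cy*cx + sy*sx))*(1 + (cx*cy - sx*sy)) + (cx^2+sx^2-1)*cy^2 + (sy^2+cy^2-1)*(1-sx^2)); [ring|].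
    rewrite Hx. replace (sy^2+cy^2) with 1 by lra. ring. }
  assert (E2 : (cy - cx)^2 = (1 - (cy*cx + sy*sx))*(1 - (cx*cy - sx*sy))).
  { transitivity ((1 - (cy*cx + sy*sx))*(1 - (cx*cy - sx*sy)) + (cx^2+sx^2-1)*sy^2 + (sy^2+cy^2-1)*(1-cx^2)); [ring|].
    rewrite Hx. replace (sy^2+cy^2) with 1 by lra. ring. }
  assert (E3 : (sy*cx - cy*sx)^2 = (1 - (cy*cx + sy*sx))*(1 + (cy*cx + sy*sx))).
  { transitivity ((1 - (cy*cx + sy*sx))*(1 + (cy*cx + sy*sx)) + (cx^2+sx^2-1)*(sy^2+cy^2) + (sy^2+cy^2-1)); [ring|].
    rewrite Hx. replace (sy^2+cy^2) with 1 by lra. ring. }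
  transitivity (A^2*b^2*(sy-sx)^2 + B^2*a^2*(cy-cx)^2 - a^2*b^2*(sy*cx - cy*sx)^2); [ring|].
  rewrite E1, E2, E3. ring.
Qed.

Lemma cs1 x : cos x ^2 + sin x ^2 = 1.
Proof. pose proof (sin2_cos2 x). unfold Rsqr in H. lra. Qed.

Lemma billiard_symmetric (a b : R) (N : nat) (P : nat -> pt) :
  a > b -> b > 0 -> (4 <= N)%nat -> Nat.Even N -> billiard_trajectory a b N P ->
  (forall i, P i <> P (S (S i))) /\
  exists k, N = (k + k)%nat /\ forall i, P (k + i)%nat = (- fst (P i), - snd (P i)).
Proof.
  intros Hab Hb0 HN Hev Hbt.
  destruct Hbt as (Hper & Hell & Hneq & [r [phi [Hr [Hpol [Hinc Hphiper]]]]] & Hconv & _ & [A [B [[HAB [HB0 Hconf]] Htan]]]).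
  assert (Ha0 : a > 0) by lra.
  pose proof PI_RGT_0 as Hpi.
  destruct (caustic_small a b A B (P 0%nat) (P 1%nat) Ha0 Hb0 HAB HB0 Hconf (Hell _) (Hell _) (Htan 0%nat)) as [HAa HBb].
  assert (HA : 0 < A < a) by lra. assert (HB : 0 < B < b) by lra.
  assert (phi_mono : forall i j, (i < j)%nat -> phi i < phi j).
  { intros i j H. induction H; [apply Hinc|]. pose proof (Hinc m). lra. }
  assert (Hd2 : forall i, phi (S (S i)) - phi i < 2*PI).
  { intros i. rewrite <- (Rplus_minus_r (2*PI) (phi i)) at 1. pose proof (Hphiper i).
    assert (phi (S (S i)) < phi (i + N)%nat) by (apply phi_mono; lia). lra. }
  assert (Hd1 : forall i, phi (S i) - phi i < 2*PI).
  { intros i. pose proof (Hd2 i). pose proof (Hinc (S i)). lra. }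
  assert (Hcp : forall i j, cross (P i) (P j) = r i * r j * sin (phi j - phi i)).
  { intros i j. rewrite (Hpol i), (Hpol j). unfold cross; cbn [fst snd]. rewrite sin_minus. ring. }
  assert (Hdp : forall i j, dot (P i) (P j) = r i * r j * cos (phi j - phi i)).
  { intros i j. rewrite (Hpol i), (Hpol j). unfold dot; cbn [fst snd]. rewrite cos_minus. ring. }
  assert (Hdist2 : forall i, P i <> P (S (S i))).
  { intros i E. pose proof (Hcp i (S (S i))) as C. pose proof (Hdp i (S (S i))) as D.
    rewrite <- E in C, D.
    assert (cross (P i) (P i) = 0) by (unfold cross; ring).
    assert (Z : 0 < phi (S (S i)) - phi i < 2*PI).
    { split; [|apply Hd2]. assert (phi i < phi (S (S i))) by (apply phi_mono; lia). lra. }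
    pose proof (Hr i) as ri. pose proof (Hr (S (S i))) as ri2.
    assert (Hs : sin (phi (S (S i)) - phi i) = 0).
    { assert (r i * r (S (S i)) > 0) by (apply Rmult_lt_0_compat; lra).
      apply (Rmult_eq_reg_l (r i * r (S (S i)))); nz. }
    apply sin0_cos in Hs; auto. rewrite Hs in D.
    assert (dot (P i) (P i) >= 0) by (unfold dot; nra).
    assert (r i * r (S (S i)) > 0) by (apply Rmult_lt_0_compat; lra). lra. }
  split; [exact Hdist2|].
  assert (Hleft : forall i, cross (P i) (P (S i)) > 0).
  { intros i. destruct (Rlt_or_le 0 (cross (P i) (P (S i)))) as [|Hle]; auto. exfalso.
    set (X := P i) in *. set (Y := P (S i)) in *. set (Z := P (S (S i))) in *.
    destruct (Req_dec (cross X Y) 0) as [E|E].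
    - apply (IPL A B X Y (0,0)); try lra.
      + apply Hneq.
      + apply collinear_on_line; [apply Hneq|]. transitivity (cross X Y); [unfold cross, vsub; cbn [fst snd]; ring|exact E].
      + cbn [fst snd]. replace (0^2/A^2 + 0^2/B^2) with 0 by (field; nz). lra.
      + apply Htan.
    - assert (Hneg : cross X Y < 0) by lra.
      destruct (Htan (S i)) as [HYZ [T [[[s HT] HTe] _]]]. fold Y Z in HYZ, HT.
      assert (HTq : qf A B T = 1) by exact HTe.
      pose proof (SideL A B X Y T (proj1 HA) (proj1 HB) (Htan i) HTq) as Hs.
      assert (HTa : qf a b T < 1) by (apply (caustic_inside a b A B); auto).
      rewrite HT in HTa. rewrite chord_param in HTa by lra.
      assert (HY : qf a b Y = 1) by exact (Hell (S i)). assert (HZ : qf a b Z = 1) by exact (Hell (S (S i))).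
      rewrite HY, HZ in HTa.
      pose proof (al_pos a b Y Z Ha0 Hb0 HYZ) as Hal.
      set (al := (fst Z - fst Y) ^ 2 / a ^ 2 + (snd Z - snd Y) ^ 2 / b ^ 2) in *.
      assert (Hss : al * (s * (s - 1)) < 0) by lra.
      assert (Hs0 : s > 0).
      { destruct (Rlt_or_le 0 s); auto. assert (0 <= s * (s-1)) by nra.
        assert (0 <= al * (s * (s - 1))) by (apply Rmult_le_pos; lra). lra. }
      pose proof (Hconv i) as Hc. fold X Y Z in Hc.
      assert (EC : cross (vsub Y X) (vsub T X) = s * cross (vsub Y X) (vsub Z Y)).
      { rewrite HT. unfold cross, vsub, vadd, vscale; cbn [fst snd]. ring. }
      rewrite EC in Hs.
      assert (Hc0 : cross (vsub Y X) (vsub Z Y) = 0).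
      { assert (0 <= s * cross (vsub Y X) (vsub Z Y)) by (apply Rmult_le_pos; lra).
        assert (s * cross (vsub Y X) (vsub Z Y) <= 0).
        { destruct (Rlt_or_le 0 (s * cross (vsub Y X) (vsub Z Y))); [|lra]. nra. }
        assert (s * cross (vsub Y X) (vsub Z Y) = 0) by lra.
        destruct (Rmult_integral _ _ H1); lra. }
      apply (NC3 a b X Y Z Ha0 Hb0 (Hell _) (Hell _) (Hell _) (Hneq i) (Hdist2 i) (Hneq (S i))).
      rewrite <- Hc0. unfold cross, vsub; cbn [fst snd]. ring. }
  assert (Hdphi : forall i, 0 < phi (S i) - phi i < PI).
  { intros i. apply sin_pos_range.
    - pose proof (Hinc i). pose proof (Hd1 i). lra.
    - pose proof (Hleft i) as L. rewrite Hcp in L.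
      pose proof (Hr i). pose proof (Hr (S i)).
      assert (r i * r (S i) > 0) by (apply Rmult_lt_0_compat; lra).
      destruct (Rlt_or_le 0 (sin (phi (S i) - phi i))); auto. nra. }
  set (t := fun i => tpar a b (P i) (phi i)).
  assert (Ht : forall i, a * cos (t i) = fst (P i) /\ b * sin (t i) = snd (P i) /\ - PI/2 < t i - phi i < PI/2).
  { intros i. apply (tpar_spec a b (P i) (r i)); auto. }
  assert (Htper : forall i, t (i + N)%nat = t i + 2*PI).
  { intros i. unfold t. rewrite Hper, Hphiper. apply tpar_period. }
  assert (Hct : forall i, cross (P i) (P (S i)) = a * b * sin (t (S i) - t i)).
  { intros i. destruct (Ht i) as [E1 [E2 _]]. destruct (Ht (S i)) as [E3 [E4 _]].
    unfold cross. rewrite <- E1, <- E2, <- E3, <- E4, sin_minus. ring. }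
  assert (Hdt : forall i, 0 < t (S i) - t i < PI).
  { intros i. apply sin_pos_range.
    - destruct (Ht i) as [_ [_ B1]]. destruct (Ht (S i)) as [_ [_ B2]]. pose proof (Hdphi i). lra.
    - pose proof (Hleft i) as L. rewrite Hct in L. assert (a * b > 0) by (apply Rmult_lt_0_compat; lra).
      destruct (Rlt_or_le 0 (sin (t (S i) - t i))); auto. nra. }
  assert (Hv : forall i, V a b A B (t i) (t (S i))).
  { intros i. split; [pose proof (Hdt i); lra|].
    pose proof (TangRel A B (P i) (P (S i)) (proj1 HA) (proj1 HB) (Htan i)) as TR.
    destruct (Ht i) as [E1 [E2 _]]. destruct (Ht (S i)) as [E3 [E4 _]].
    unfold cross in TR. rewrite <- E1, <- E2, <- E3, <- E4 in TR.
    pose proof (idt a b A B (cos (t i)) (sin (t i)) (cos (t (S i))) (sin (t (S i))) (cs1 _) (cs1 _)) as ID.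
    assert (Z : -(1 - (cos (t (S i)) * cos (t i) + sin (t (S i)) * sin (t i))) * G a b A B (t i) (t (S i)) = 0).
    { unfold G. rewrite cos_minus, cos_plus. rewrite <- ID.
      replace (A ^ 2 * (b * sin (t (S i)) - b * sin (t i)) ^ 2 + B ^ 2 * (a * cos (t (S i)) - a * cos (t i)) ^ 2)
        with ((a * cos (t i) * (b * sin (t (S i))) - b * sin (t i) * (a * cos (t (S i)))) ^ 2) by (rewrite <- TR; ring).
      ring. }
    rewrite <- cos_minus in Z.
    assert (cos (t (S i) - t i) < 1) by (apply cos_lt_1; apply Hdt).
    destruct (Rmult_integral _ _ Z) as [W|W]; [lra|exact W]. }
  destruct (symmetry_index a b A B HA HB N t Hv Htper Hev) as [k [Hk Hsym]].
  exists k. split; auto. intros i.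
  destruct (Ht i) as [E1 [E2 _]]. destruct (Ht (k + i)%nat) as [E3 [E4 _]].
  rewrite (surjective_pairing (P (k+i)%nat)). rewrite <- E1, <- E2, <- E3, <- E4, Hsym, neg_cos, neg_sin.
  f_equal; ring.
Qed.

Lemma perp2 (u v w : pt) : dot w u = 0 -> dot w v = 0 -> w <> (0,0) -> cross u v = 0.
Proof.
  intros H1 H2 Hw. destruct u as [ux uy], v as [vx vy], w as [wx wy]. unfold dot, cross in *; cbn [fst snd] in *.
  assert (E1 : (ux * vy - uy * vx) * wx = vy * (wx * ux + wy * uy) - uy * (wx * vx + wy * vy)) by ring.
  assert (E2 : (ux * vy - uy * vx) * wy = - vx * (wx * ux + wy * uy) + ux * (wx * vx + wy * vy)) by ring.
  rewrite H1, H2 in E1, E2.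
  destruct (Req_dec wx 0) as [Ex|Ex].
  - destruct (Req_dec wy 0) as [Ey|Ey]; [subst; exfalso; apply Hw; reflexivity|].
    apply (Rmult_eq_reg_r wy); auto. lra.
  - apply (Rmult_eq_reg_r wx); auto. lra.
Qed.

Lemma char_unique (f m Q Q' : pt) : dot m Q = 1 -> cross (vsub f Q) m = 0 ->
  dot m Q' = 1 -> cross (vsub f Q') m = 0 -> Q = Q'.
Proof.
  destruct f as [fx fy], m as [mx my], Q as [qx qy], Q' as [px py]. unfold dot, cross, vsub; cbn [fst snd].
  intros H1 H2 H3 H4.
  set (ux := qx - px). set (uy := qy - py).
  assert (D1 : mx * ux + my * uy = 0) by (unfold ux, uy; lra).
  assert (D2 : ux * my - uy * mx = 0) by (unfold ux, uy; lra).
  assert (Hm : mx^2 + my^2 > 0).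
  { destruct (Req_dec mx 0) as [E|E]; [|pose proof (sq_pos mx E); nra].
    destruct (Req_dec my 0) as [E'|E']; [subst; lra|pose proof (sq_pos my E'); nra]. }
  assert (Ex : (mx^2+my^2) * ux = 0).
  { transitivity (mx * (mx * ux + my * uy) + my * (ux * my - uy * mx)); [ring|]. rewrite D1, D2; ring. }
  assert (Ey : (mx^2+my^2) * uy = 0).
  { transitivity (my * (mx * ux + my * uy) - mx * (ux * my - uy * mx)); [ring|]. rewrite D1, D2; ring. }
  apply Rmult_integral in Ex. apply Rmult_integral in Ey.
  f_equal; unfold ux, uy in *; lra.
Qed.

Definition sumR (l : list R) := fold_right Rplus 0 l.

Lemma sumR_init (c : R) l : fold_right Rplus c l = c + sumR l.
Proof. induction l; simpl; [ring|]. unfold sumR in *. rewrite IHl. ring. Qed.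

Lemma shift1 (N : nat) (h : nat -> R) : (forall i, h (i + N)%nat = h i) ->
  sumR (map (fun i => h (S i)) (seq 0 N)) = sumR (map h (seq 0 N)).
Proof.
  intros Hp. destruct N as [|n]; [reflexivity|].
  replace (map (fun i => h (S i)) (seq 0 (S n))) with (map h (seq 1 (S n))).
  - rewrite seq_S. simpl seq at 2. rewrite map_app. unfold sumR. rewrite fold_right_app. simpl.
    rewrite sumR_init. rewrite <- (Hp 0%nat). simpl. unfold sumR. ring.
  - rewrite <- seq_shift, map_map. reflexivity.
Qed.

Lemma shiftk (N : nat) (g : nat -> R) : (forall i, g (i + N)%nat = g i) ->
  forall k, sumR (map (fun i => g (k + i)%nat) (seq 0 N)) = sumR (map g (seq 0 N)).
Proof.
  intros Hp k. induction k.
  - simpl. reflexivity.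
  - rewrite <- IHk. rewrite <- (shift1 N (fun i => g (k + i)%nat)).
    + f_equal. apply map_ext. intros i. f_equal. lia.
    + intros i. replace (k + (i + N))%nat with ((k + i) + N)%nat by lia. apply Hp.
Qed.

Lemma area_simpl (N : nat) (W : nat -> pt) : (N > 0)%nat -> W N = W 0%nat ->
  signed_area N W = / 2 * sumR (map (fun i => cross (W i) (W (S i))) (seq 0 N)).
Proof.
  intros HN HW. unfold signed_area, sumR. f_equal. f_equal. apply map_ext_in.
  intros i Hi. apply in_seq in Hi. f_equal.
  destruct (Nat.eq_dec (S i) N) as [E|E].
  - rewrite E, Nat.mod_same by lia. rewrite HW. reflexivity.
  - rewrite Nat.mod_small by lia. reflexivity.
Qed.

Definition mvec (a b : R) (X : pt) : pt := (fst X / a^2, snd X / b^2).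

Theorem mainTheorem3 (a b : R) (N : nat) (P P' Q1 Q2 : nat -> pt) :
  a > b -> b > 0 ->
  (4 <= N)%nat -> Nat.Even N ->
  billiard_trajectory a b N P ->
  outer_polygon a b P P' ->
  pedal_feet (focus1 a b) P' Q1 ->
  pedal_feet (focus2 a b) P' Q2 ->
  signed_area N Q1 = signed_area N Q2.
Proof.
  intros Hab Hb HN Hev Hbt Hout Hq1 Hq2.
  destruct (billiard_symmetric a b N P Hab Hb HN Hev Hbt) as [Hdist2 [k [Hk Hsym]]].
  destruct Hbt as (Hper & Hell & Hneq & _).
  assert (Ha : a > 0) by lra.
  assert (HP'd : forall i, P' i <> P' (S i)).
  { intros i E. destruct (Hout i) as [T1 T2]. destruct (Hout (S i)) as [T3 T4].
    rewrite <- E in T4.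
    set (X := P' i) in *.
    set (w := (fst X / a^2, snd X / b^2)).
    assert (Hw : forall Z, on_tangent a b Z X -> dot w Z = 1).
    { intros Z HZ. unfold on_tangent in HZ. unfold dot, w; cbn [fst snd]. rewrite <- HZ. field; nz. }
    apply Hw in T1. apply Hw in T2. apply Hw in T4.
    apply (NC3 a b (P i) (P (S i)) (P (S (S i))) Ha Hb (Hell _) (Hell _) (Hell _) (Hneq i) (Hdist2 i) (Hneq (S i))).
    apply (perp2 _ _ w).
    - unfold dot, vsub in *; cbn [fst snd] in *. lra.
    - unfold dot, vsub in *; cbn [fst snd] in *. lra.
    - intro Ew. rewrite Ew in T1. unfold dot in T1; cbn [fst snd] in T1. lra. }
  assert (Hchar : forall f Q, pedal_feet f P' Q -> forall i,
            dot (mvec a b (P (S i))) (Q i) = 1 /\ cross (vsub f (Q i)) (mvec a b (P (S i))) = 0).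
  { intros f Q Hq i. destruct (Hq i) as [[tau Htau] Hperp].
    destruct (Hout i) as [_ T2]. destruct (Hout (S i)) as [T3 _].
    assert (D1 : dot (mvec a b (P (S i))) (P' i) = 1).
    { unfold on_tangent in T2. unfold dot, mvec; cbn [fst snd]. rewrite <- T2. field; nz. }
    assert (D2 : dot (mvec a b (P (S i))) (P' (S i)) = 1).
    { unfold on_tangent in T3. unfold dot, mvec; cbn [fst snd]. rewrite <- T3. field; nz. }
    split.
    - rewrite Htau. transitivity (dot (mvec a b (P (S i))) (P' i) + tau * (dot (mvec a b (P (S i))) (P' (S i)) - dot (mvec a b (P (S i))) (P' i))).
      + unfold dot, vadd, vscale, vsub; cbn [fst snd]. ring.
      + rewrite D1, D2. ring.
    - apply (perp2 _ _ (vsub (P' (S i)) (P' i))).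
      + unfold dot, vsub in *; cbn [fst snd] in *. lra.
      + unfold dot, vsub in *; cbn [fst snd] in *. lra.
      + intro E. apply (HP'd i). destruct (P' i) as [x1 y1], (P' (S i)) as [x2 y2].
        unfold vsub in E; cbn [fst snd] in E. injection E; intros. f_equal; lra. }
  pose proof (Hchar _ _ Hq1) as C1. pose proof (Hchar _ _ Hq2) as C2.
  assert (HNp : (N > 0)%nat) by lia.
  assert (Qper : forall Q f, (forall i, dot (mvec a b (P (S i))) (Q i) = 1 /\ cross (vsub f (Q i)) (mvec a b (P (S i))) = 0) ->
            forall i, Q (i + N)%nat = Q i).
  { intros Q f HC i. destruct (HC i) as [A1 A2]. destruct (HC (i + N)%nat) as [A3 A4].
    replace (S (i + N)) with (S i + N)%nat in A3, A4 by lia. rewrite Hper in A3, A4.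
    apply (char_unique f (mvec a b (P (S i)))); auto. }
  assert (Q1p := Qper Q1 _ C1). assert (Q2p := Qper Q2 _ C2).
  assert (Qsym : forall i, Q2 i = (- fst (Q1 (k + i)%nat), - snd (Q1 (k + i)%nat))).
  { intros i. destruct (C2 i) as [A1 A2]. destruct (C1 (k + i)%nat) as [A3 A4].
    replace (S (k + i)) with (k + S i)%nat in A3, A4 by lia. rewrite Hsym in A3, A4.
    apply (char_unique (focus2 a b) (mvec a b (P (S i)))); auto.
    - unfold dot, mvec in *; cbn [fst snd] in *.
      replace (fst (P (S i)) / a ^ 2 * - fst (Q1 (k + i)%nat) + snd (P (S i)) / b ^ 2 * - snd (Q1 (k + i)%nat))
        with (- fst (P (S i)) / a ^ 2 * fst (Q1 (k + i)%nat) + - snd (P (S i)) / b ^ 2 * snd (Q1 (k + i)%nat)) by (field; nz).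
      exact A3.
    - unfold cross, vsub, mvec, focus1, focus2 in *; cbn [fst snd] in *.
      lra. }
  rewrite (area_simpl N Q1 HNp), (area_simpl N Q2 HNp).
  2: { rewrite <- (Q2p 0%nat). reflexivity. }
  2: { rewrite <- (Q1p 0%nat). reflexivity. }
  f_equal.
  set (g := fun i => cross (Q1 i) (Q1 (S i))).
  transitivity (sumR (map (fun i => g (k + i)%nat) (seq 0 N))).
  - rewrite (shiftk N g). reflexivity.
    intros i. unfold g. replace (S (i + N)) with (S i + N)%nat by lia. rewrite !Q1p. reflexivity.
  - f_equal. apply map_ext. intros i. unfold g. rewrite !Qsym.
    replace (k + S i)%nat with (S (k + i)) by lia. unfold cross; cbn [fst snd]. ring.
Qed.
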